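(* Let $\mathfrak g=\mathfrak a\ltimes\mathfrak b$ be a countable-dimensional complex Lie algebra, where $\mathfrak a$ is a Lie subalgebra of $\mathfrak g$ and $\mathfrak b$ is an ideal of $\mathfrak g$ with $\mathfrak g=\mathfrak a\oplus\mathfrak b$ as vector spaces. Let $M$ be a simple $\mathfrak g$-module containing a simple $\mathfrak b$-submodule $H$ whose $\mathfrak b$-module structure extends to a $\mathfrak g$-module structure on $H$; denote this $\mathfrak g$-module by $H^{\mathfrak g}$. Then $M\cong H^{\mathfrak g}\otimes U^{\mathfrak g}$ as $\mathfrak g$-modules for some simple $\mathfrak a$-module $U$.
   Context: For an $\mathfrak a$-module $U$, $U^{\mathfrak g}$ denotes the $\mathfrak g$-module obtained from $U$ by letting $\mathfrak b$ act trivially (via $\mathfrak g/\mathfrak b\cong\mathfrak a$). The tensor product of $\mathfrak g$-modules carries the diagonal action $x(u\otimes w)=xu\otimes w+u\otimes xw$. *)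

(* Defs.v *)
From mathcomp Require Import all_boot all_algebra.
From mathcomp Require Import complex reals.
Set Implicit Arguments. Unset Strict Implicit. Unset Printing Implicit Defensive.
Import GRing.Theory.
Local Open Scope ring_scope.

Definition linear_map (K : fieldType) (V W : lmodType K) (f : V -> W) : Prop :=
  forall (c : K) (v w : V), f (c *: v + w) = c *: f v + f w.

Definition bilinear_map (K : fieldType) (V W X : lmodType K) (f : V -> W -> X) : Prop :=
  (forall w, linear_map (fun v => f v w)) /\ (forall v, linear_map (f v)).

Definition is_subspace (K : fieldType) (V : lmodType K) (S : V -> Prop) : Prop :=
  S 0 /\ (forall u v, S u -> S v -> S (u + v)) /\ (forall (c : K) v, S v -> S (c *: v)).

Definition is_lie_algebra (K : fieldType) (g : lmodType K) (br : g -> g -> g) : Prop :=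
  bilinear_map br /\ (forall x, br x x = 0) /\
  (forall x y z, br x (br y z) + br y (br z x) + br z (br x y) = 0).

Definition lie_subalgebra (K : fieldType) (g : lmodType K) (br : g -> g -> g)
    (a : g -> Prop) : Prop :=
  is_subspace a /\ forall x y, a x -> a y -> a (br x y).

Definition lie_ideal (K : fieldType) (g : lmodType K) (br : g -> g -> g)
    (b : g -> Prop) : Prop :=
  is_subspace b /\ forall x y, b y -> b (br x y).

Definition vs_direct_sum (K : fieldType) (g : lmodType K) (a b : g -> Prop) : Prop :=
  (forall x, a x -> b x -> x = 0) /\ (forall x, exists y z, a y /\ b z /\ x = y + z).

Definition countable_dim (K : fieldType) (g : lmodType K) : Prop :=
  exists e : nat -> g, forall x, exists (n : nat) (c : nat -> K),
    x = \sum_(i < n) c i *: e i.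

Definition is_lie_module_over (K : fieldType) (g : lmodType K) (br : g -> g -> g)
    (L : g -> Prop) (V : lmodType K) (act : g -> V -> V) : Prop :=
  (forall v, linear_map (fun x => act x v)) /\ (forall x, linear_map (act x)) /\
  (forall x y v, L x -> L y -> act (br x y) v = act x (act y v) - act y (act x v)).

Definition is_lie_module (K : fieldType) (g : lmodType K) (br : g -> g -> g)
    (V : lmodType K) (act : g -> V -> V) : Prop :=
  is_lie_module_over br (fun _ => True) act.

Definition simple_over (K : fieldType) (g : lmodType K) (L : g -> Prop)
    (V : lmodType K) (act : g -> V -> V) : Prop :=
  (exists v : V, v <> 0) /\
  forall S : V -> Prop, is_subspace S -> (forall x v, L x -> S v -> S (act x v)) ->
    (forall v, S v -> v = 0) \/ (forall v, S v).

Definition is_tensor_product (K : fieldType) (H U T : lmodType K)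
    (beta : H -> U -> T) : Prop :=
  bilinear_map beta /\
  forall (W : lmodType K) (phi : H -> U -> W), bilinear_map phi ->
    exists f : T -> W, (linear_map f /\ forall h u, f (beta h u) = phi h u) /\
      forall f' : T -> W, linear_map f' -> (forall h u, f' (beta h u) = phi h u) ->
        forall t, f' t = f t.

(* Main.v *)
Require Import Defs.
From mathcomp Require Import all_boot all_algebra.
From mathcomp Require Import complex reals.
From mathcomp Require Import boolp.
From HB Require Import structures.
Set Implicit Arguments. Unset Strict Implicit. Unset Printing Implicit Defensive.
Import GRing.Theory.
Local Open Scope ring_scope.

Section LinHelp.
Variables (K : fieldType) (V W : lmodType K) (f : V -> W).
Hypothesis Hf : linear_map f.

Lemma lin0 : f 0 = 0.
Proof.
have H := Hf 1 0 0; rewrite !scale1r addr0 in H.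
by apply: (addrI (f 0)); rewrite addr0 -H.
Qed.
Lemma linD u v : f (u + v) = f u + f v.
Proof. by have := Hf 1 u v; rewrite !scale1r. Qed.
Lemma linZ c v : f (c *: v) = c *: f v.
Proof. by rewrite -[c *: v]addr0 Hf lin0 addr0. Qed.
Lemma linN v : f (- v) = - f v.
Proof. by rewrite -scaleN1r linZ scaleN1r. Qed.
Lemma linB u v : f (u - v) = f u - f v.
Proof. by rewrite linD linN. Qed.
Lemma lin_sum (I : Type) (r : seq I) (P : pred I) (F : I -> V) :
  f (\sum_(i <- r | P i) F i) = \sum_(i <- r | P i) f (F i).
Proof. exact: (big_morph f linD lin0). Qed.
End LinHelp.

Lemma linear_comp (K : fieldType) (U V W : lmodType K) (f : V -> W) (h : U -> V) :
  linear_map f -> linear_map h -> linear_map (fun x => f (h x)).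
Proof. by move=> Hf Hh c u v; rewrite Hh Hf. Qed.

Section Main.
Variables (K : fieldType) (g : lmodType K) (br : g -> g -> g) (a b : g -> Prop).
Variables (M : lmodType K) (actM : g -> M -> M).
Variables (H : lmodType K) (iota : H -> M) (rho : g -> H -> H).
Hypothesis HM : is_lie_module br actM.
Hypothesis Hrho : is_lie_module br rho.

Definition isHom (f : H -> M) :=
  linear_map f /\ forall y h, b y -> f (rho y h) = actM y (f h).
Record Hom := MkHom { hval :> H -> M; hprop : isHom hval }.

Lemma hom_ext (f f' : Hom) : (forall h, f h = f' h) -> f = f'.
Proof.
case: f => f Hf; case: f' => f' Hf' /= E.
have ef : f = f' by apply: funext.
subst f'; congr MkHom; exact: Prop_irrelevance.
Qed.

HB.instance Definition _ := gen_eqMixin Hom.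
HB.instance Definition _ := gen_choiceMixin Hom.

Lemma actM_lin x : linear_map (actM x). Proof. exact: HM.2.1. Qed.
Lemma rho_lin x : linear_map (rho x). Proof. exact: Hrho.2.1. Qed.
Lemma hom_lin (f : Hom) : linear_map f. Proof. exact: (hprop f).1. Qed.
Lemma hom_eqv (f : Hom) y h : b y -> f (rho y h) = actM y (f h).
Proof. exact: (hprop f).2. Qed.

Fact zero_isHom : isHom (fun _ => 0).
Proof.
split; first by move=> c u v; rewrite scaler0 addr0.
by move=> y h _; rewrite lin0 //; apply: actM_lin.
Qed.
Definition hzero := MkHom zero_isHom.

Fact add_isHom (f f' : Hom) : isHom (fun h => f h + f' h).
Proof.
split.
  move=> c u v; rewrite !(hom_lin f) !(hom_lin f') scalerDr.
  by rewrite -!addrA; congr (_ + _); rewrite addrCA.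
by move=> y h By; rewrite !hom_eqv // linD //; apply: actM_lin.
Qed.
Definition hadd f f' := MkHom (add_isHom f f').

Fact opp_isHom (f : Hom) : isHom (fun h => - f h).
Proof.
split.
  by move=> c u v; rewrite (hom_lin f) opprD scalerN.
by move=> y h By; rewrite hom_eqv // linN //; apply: actM_lin.
Qed.
Definition hopp f := MkHom (opp_isHom f).

Fact scale_isHom (c : K) (f : Hom) : isHom (fun h => c *: f h).
Proof.
split.
  by move=> d u v; rewrite (hom_lin f) scalerDr !scalerA mulrC.
by move=> y h By; rewrite hom_eqv // linZ //; apply: actM_lin.
Qed.
Definition hscale c f := MkHom (scale_isHom c f).

Fact haddA : associative hadd.
Proof. by move=> x y z; apply: hom_ext => h /=; rewrite addrA. Qed.
Fact haddC : commutative hadd.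
Proof. by move=> x y; apply: hom_ext => h /=; rewrite addrC. Qed.
Fact hadd0 : left_id hzero hadd.
Proof. by move=> x; apply: hom_ext => h /=; rewrite add0r. Qed.
Fact haddN : left_inverse hzero hopp hadd.
Proof. by move=> x; apply: hom_ext => h /=; rewrite addNr. Qed.

HB.instance Definition _ := GRing.isZmodule.Build Hom haddA haddC hadd0 haddN.

Fact hscaleA c d (f : Hom) : hscale c (hscale d f) = hscale (c * d) f.
Proof. by apply: hom_ext => h /=; rewrite scalerA. Qed.
Fact hscale1 : left_id 1 hscale.
Proof. by move=> x; apply: hom_ext => h /=; rewrite scale1r. Qed.
Fact hscaleDr : right_distributive hscale (@GRing.add Hom).
Proof. by move=> c x y; apply: hom_ext => h /=; rewrite scalerDr. Qed.
Fact hscaleDl (f : Hom) : {morph hscale^~ f : c d / c + d}.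
Proof. by move=> c d; apply: hom_ext => h /=; rewrite scalerDl. Qed.

HB.instance Definition _ := GRing.Zmodule_isLmodule.Build K Hom hscaleA hscale1 hscaleDr hscaleDl.

Lemma hom0E h : (0 : Hom) h = 0. Proof. by []. Qed.
Lemma homDE (f f' : Hom) h : (f + f') h = f h + f' h. Proof. by []. Qed.
Lemma homNE (f : Hom) h : (- f) h = - f h. Proof. by []. Qed.
Lemma homZE c (f : Hom) h : (c *: f) h = c *: f h. Proof. by []. Qed.


Hypothesis Hb : lie_ideal br b.

Lemma actM_comm x y v : actM x (actM y v) = actM (br x y) v + actM y (actM x v).
Proof. by rewrite (HM.2.2 x y v I I) subrK. Qed.
Lemma rho_comm x y v : rho x (rho y v) = rho (br x y) v + rho y (rho x v).
Proof. by rewrite (Hrho.2.2 x y v I I) subrK. Qed.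
Lemma actM_linx v : linear_map (fun x => actM x v). Proof. exact: HM.1. Qed.
Lemma rho_linx v : linear_map (fun x => rho x v). Proof. exact: Hrho.1. Qed.

Fact gam_isHom x (f : Hom) : isHom (fun h => actM x (f h) - f (rho x h)).
Proof.
split.
  move=> c u v; rewrite (rho_lin x) !(hom_lin f) (actM_lin x).
  rewrite scalerBr opprD !addrA; congr (_ - _).
  by rewrite addrAC.
move=> y h By.
rewrite (hom_eqv f h By) (actM_comm x y) (rho_comm x y) (linD (hom_lin f)).
rewrite (hom_eqv f h (Hb.2 x y By)) (hom_eqv f (rho x h) By).
rewrite (linB (actM_lin y)) opprD addrA.
by rewrite [LHS](ACl ((1*3)*2*4)) /= subrr add0r.
Qed.
Definition gam x f := MkHom (gam_isHom x f).
Lemma gamE x (f : Hom) h : gam x f h = actM x (f h) - f (rho x h).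
Proof. by []. Qed.

Lemma gam_module : is_lie_module br gam.
Proof.
split; [|split].
- move=> f c x x'; apply: hom_ext => h; rewrite homDE homZE !gamE.
  rewrite actM_linx rho_linx (hom_lin f) scalerBr opprD !addrA; congr (_ - _).
  by rewrite addrAC.
- move=> x c f f'; apply: hom_ext => h; rewrite homDE homZE !gamE homDE homZE.
  rewrite (actM_lin x) scalerBr opprD !addrA; congr (_ - _).
  by rewrite addrAC.
- move=> x y f _ _; apply: hom_ext => h.
  rewrite homDE homNE !gamE (linB (actM_lin x)) (linB (actM_lin y)).
  rewrite (HM.2.2 x y _ I I) (Hrho.2.2 x y _ I I) (linB (hom_lin f)).
  rewrite !opprB ?opprD ?opprK !addrA.
  set P := actM x _; set Q := actM y (actM x _); set A := actM x _; set B := actM y _.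
  set C := f _; set D := f _.
  by rewrite [RHS](ACl (((((1*8)*3)*6)*(2*5))*(4*7))) /= !addNr !addr0.
Qed.

Lemma gam_b y f : b y -> gam y f = 0.
Proof. by move=> By; apply: hom_ext => h; rewrite gamE hom_eqv // subrr. Qed.


Hypothesis HHs : simple_over b rho.
Hypothesis Schur : forall phi : H -> H, linear_map phi ->
  (forall y h, b y -> phi (rho y h) = rho y (phi h)) -> exists c : K, forall h, phi h = c *: h.

Lemma sum_recl (V : zmodType) n (F : nat -> V) :
  \sum_(i < n.+1) F i = F 0%N + \sum_(i < n) F i.+1.
Proof. by rewrite big_ord_recl; congr (_ + _); apply: eq_bigr => i _; rewrite lift0. Qed.

Lemma hom_sumE n (F : 'I_n -> Hom) h : (\sum_(i < n) F i) h = \sum_(i < n) F i h.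
Proof. exact: (big_morph (fun f : Hom => f h) (fun f f' => homDE f f' h) (hom0E h)). Qed.

Lemma actM_sum x n (F : nat -> M) : actM x (\sum_(i < n) F i) = \sum_(i < n) actM x (F i).
Proof. exact: (lin_sum (actM_lin x)). Qed.
Lemma hom_sum (f : Hom) n (F : nat -> H) : f (\sum_(i < n) F i) = \sum_(i < n) f (F i).
Proof. exact: (lin_sum (hom_lin f)). Qed.

Definition indep n (fs : nat -> Hom) := forall c : nat -> K,
  \sum_(i < n) c i *: fs i = 0 -> forall i, (i < n)%N -> c i = 0.

Lemma indep_shift n fs : indep n.+1 fs -> indep n (fun i => fs i.+1).
Proof.
move=> Hi c Hc i Hin.
have := Hi (fun i => if i is j.+1 then c j else 0) _ i.+1 Hin; apply.
by rewrite (@sum_recl _ _ (fun i => (if i is j.+1 then c j else 0) *: fs i)) scale0r add0r.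
Qed.

Lemma key n : forall (fs : nat -> Hom) (hs : nat -> H), indep n fs ->
  \sum_(i < n) fs i (hs i) = 0 -> forall i, (i < n)%N -> hs i = 0.
Proof.
elim: n => [|n IH] fs hs Hi Hs; first by [].
have Hi' := indep_shift Hi.
move: Hs; rewrite (@sum_recl _ _ (fun i => fs i (hs i))) => Hs.
have h00 : hs 0%N = 0.
  case: (EM (hs 0%N = 0)) => // Hne; exfalso.
  pose Pk := fun k => exists ks : nat -> H, fs 0%N k + \sum_(i < n) fs i.+1 (ks i) = 0.
  have Psub : is_subspace Pk.
    split; [|split].
    - exists (fun _ => 0); rewrite (lin0 (hom_lin _)) add0r.
      by apply: big1 => i _; rewrite (lin0 (hom_lin _)).
    - move=> u v [ku Hu] [kv Hv]; exists (fun i => ku i + kv i).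
      rewrite (linD (hom_lin _)).
      under eq_bigr do rewrite (linD (hom_lin _)).
      by rewrite big_split /= addrACA Hu Hv addr0.
    - move=> c v [kv Hv]; exists (fun i => c *: kv i).
      rewrite (linZ (hom_lin _)).
      under eq_bigr do rewrite (linZ (hom_lin _)).
      by rewrite -scaler_sumr -scalerDr Hv scaler0.
  have Pst : forall y v, b y -> Pk v -> Pk (rho y v).
    move=> y v By [kv Hv]; exists (fun i => rho y (kv i)).
    rewrite hom_eqv //.
    under eq_bigr do rewrite hom_eqv //.
    by rewrite -(lin_sum (actM_lin y)) -(linD (actM_lin y)) Hv (lin0 (actM_lin y)).
  have Ph0 : Pk (hs 0%N) by exists (fun i => hs i.+1).
  case: (HHs.2 Pk Psub Pst) => [Hz|Hall]; first by apply: Hne; apply: Hz.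
  have [Psi HPsi] := choice Hall.
  have uniq : forall k (ks ks' : nat -> H), fs 0%N k + \sum_(i < n) fs i.+1 (ks i) = 0 ->
      fs 0%N k + \sum_(i < n) fs i.+1 (ks' i) = 0 -> forall i, (i < n)%N -> ks i = ks' i.
    move=> k ks ks' E1 E2 i Hin; apply/eqP; rewrite -subr_eq0; apply/eqP.
    apply: (IH _ (fun i => ks i - ks' i) Hi' _ i Hin).
    under eq_bigr do rewrite (linB (hom_lin _)).
    rewrite sumrB; apply/eqP; rewrite subr_eq0; apply/eqP.
    by apply: (addrI (fs 0%N k)); rewrite E1 E2.
  have Hd : forall i, exists d : K, (i < n)%N -> forall k, Psi k i = d *: k.
    move=> i; case: (ltnP i n) => Hin; last by exists 0.
    have Hlin : linear_map (fun k => Psi k i).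
      move=> c u v; symmetry; apply: (uniq (c *: u + v) (fun j => c *: Psi u j + Psi v j) (Psi (c *: u + v))) => //.
      rewrite (linD (hom_lin _)) (linZ (hom_lin _)).
      under eq_bigr do rewrite (linD (hom_lin _)) (linZ (hom_lin _)).
      rewrite big_split /= -scaler_sumr addrACA -scalerDr !HPsi.
      by rewrite scaler0 addr0.
    have Heqv : forall y h, b y -> Psi (rho y h) i = rho y (Psi h i).
      move=> y h By; symmetry; apply: (uniq (rho y h) (fun j => rho y (Psi h j)) (Psi (rho y h))) => //.
      rewrite hom_eqv //.
      under eq_bigr do rewrite hom_eqv //.
      by rewrite -(lin_sum (actM_lin y)) -(linD (actM_lin y)) HPsi (lin0 (actM_lin y)).
    have [d Hd] := Schur Hlin Heqv.
    by exists d => _.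
  have [d Hd'] := choice Hd.
  have Hz : fs 0%N + \sum_(i < n) d i *: fs i.+1 = 0.
    apply: hom_ext => k; rewrite homDE hom_sumE hom0E -[RHS](HPsi k); congr (_ + _).
    by apply: eq_bigr => i _; rewrite homZE (Hd' i (ltn_ord i)) (linZ (hom_lin _)).
  suff : (1 : K) = 0 by move/eqP; rewrite oner_eq0.
  apply: (Hi (fun i => if i is j.+1 then d j else 1) _ 0%N (ltn0Sn n)).
  by rewrite (@sum_recl _ _ (fun i => (if i is j.+1 then d j else 1) *: fs i)) scale1r.
move: Hs; rewrite h00 (lin0 (hom_lin _)) add0r => Hs.
case=> [|i] Hin //; exact: (IH (fun i => fs i.+1) (fun i => hs i.+1) Hi' Hs i Hin).
Qed.

Lemma sum_del (V : zmodType) m (j : nat) (F : nat -> V) : (j <= m)%N ->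
  \sum_(i < m.+1) F i = F j + \sum_(i < m) F (bump j i).
Proof.
move=> Hj; have Hj' : (j < m.+1)%N by [].
by rewrite (bigD1_ord (Ordinal Hj') (P := xpredT)).
Qed.

Lemma bump_lt j m i : (i < m)%N -> (bump j i < m.+1)%N.
Proof. by rewrite /bump; case: (j <= i)%N => /=; rewrite ?add0n ?add1n // => /ltnW. Qed.

Lemma not_indep n fs : ~ indep n fs ->
  exists c : nat -> K, \sum_(i < n) c i *: fs i = 0 /\ exists j, (j < n)%N /\ c j <> 0.
Proof.
move=> Hni; case: (EM (exists c : nat -> K, \sum_(i < n) c i *: fs i = 0 /\
   exists j, (j < n)%N /\ c j <> 0)) => // Hno; exfalso; apply: Hni => c Hc i Hin.
by case: (EM (c i = 0)) => // Hci; exfalso; apply: Hno; exists c; split => //; exists i.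
Qed.

Lemma eval_bilin : bilinear_map (fun (h : H) (f : Hom) => f h).
Proof. by split => [f|h]; [exact: hom_lin | move=> c f f']. Qed.

Lemma red n fs (hs : nat -> H) : ~ indep n fs -> exists m j (hs' : nat -> H),
  n = m.+1 /\ (j <= m)%N /\ forall (X : lmodType K) (Psi : H -> Hom -> X), bilinear_map Psi ->
  \sum_(i < n) Psi (hs i) (fs i) = \sum_(i < m) Psi (hs' i) (fs (bump j i)).
Proof.
move=> /not_indep [c [Hc [j [Hjn Hcj]]]].
case: n Hjn Hc => // m Hjm Hc.
exists m, j, (fun i => hs (bump j i) - (c (bump j i) / c j) *: hs j).
split => //; split => // X Psi [Hl Hr].
rewrite (@sum_del _ _ j (fun i => Psi (hs i) (fs i))) //.
under [RHS]eq_bigr do rewrite (linB (Hl _)) (linZ (Hl _)).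
rewrite sumrB addrC; congr (_ + _).
move: Hc; rewrite (@sum_del _ _ j (fun i => c i *: fs i)) // => /eqP.
rewrite addr_eq0 => /eqP /(congr1 (fun f => (c j)^-1 *: f)).
rewrite scalerA mulVf ?scale1r => [->|]; last exact/eqP.
rewrite (linZ (Hr _)) (linN (Hr _)) (lin_sum (Hr _)) scalerN scaler_sumr; congr (- _).
apply: eq_bigr => i _; rewrite (linZ (Hr _)) scalerA.
by congr (_ *: _); rewrite mulrC.
Qed.

Lemma wd n : forall (fs : nat -> Hom) (hs : nat -> H), \sum_(i < n) fs i (hs i) = 0 ->
  forall (X : lmodType K) (Psi : H -> Hom -> X), bilinear_map Psi ->
  \sum_(i < n) Psi (hs i) (fs i) = 0.
Proof.
elim/ltn_ind: n => n IH fs hs Hs X Psi HPsi.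
case: (EM (indep n fs)) => Hi.
  have Hz := key Hi Hs.
  by apply: big1 => i _; rewrite (Hz i (ltn_ord i)) (lin0 (HPsi.1 _)).
have [m [j [hs' [En [Hj Hid]]]]] := red hs Hi.
rewrite (Hid _ _ HPsi).
subst n; apply: (IH m (ltnSn m) (fun i => fs (bump j i)) hs') => //.
by rewrite -(Hid _ _ eval_bilin).
Qed.

Lemma subspace_sum (V : lmodType K) (S : V -> Prop) : is_subspace S ->
  forall n (c : nat -> K) (F : nat -> V), (forall i, (i < n)%N -> S (F i)) ->
  S (\sum_(i < n) c i *: F i).
Proof.
move=> [S0 [SD SZ]]; elim=> [|n IH] c F HF; first by rewrite big_ord0.
rewrite big_ord_recr /=; apply: SD; last by apply: SZ; apply: HF.
by apply: IH => i Hi; apply: HF; apply: ltnW.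
Qed.

Lemma dep (S : Hom -> Prop) (HS : is_subspace S) n : forall (fs : nat -> Hom) (hs : nat -> H)
  (f0 : Hom) h0, h0 <> 0 -> (forall i, (i < n)%N -> S (fs i)) ->
  f0 h0 = \sum_(i < n) fs i (hs i) -> S f0.
Proof.
elim/ltn_ind: n => n IH fs hs f0 h0 Hh0 HSf E.
case: (EM (indep n fs)) => Hi; last first.
  have [m [j [hs' [En [Hj Hid]]]]] := red hs Hi.
  subst n; apply: (IH m (ltnSn m) (fun i => fs (bump j i)) hs' f0 h0 Hh0).
    by move=> i Hi'; apply: HSf; apply: bump_lt.
  by rewrite E (Hid _ _ eval_bilin).
pose fs2 := fun i => if i is j.+1 then fs j else f0.
pose hs2 := fun i => if i is j.+1 then - hs j else h0.
case: (EM (indep n.+1 fs2)) => Hi2.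
  exfalso; apply: Hh0; apply: (@key n.+1 fs2 hs2 Hi2 _ 0%N (ltn0Sn n)).
  rewrite (@sum_recl _ _ (fun i => fs2 i (hs2 i))) /= E -big_split.
  by apply: big1 => i _ /=; rewrite (linN (hom_lin _)) subrr.
have [c [Hc [j [Hjn Hcj]]]] := not_indep Hi2.
move: Hc; rewrite (@sum_recl _ _ (fun i => c i *: fs2 i)) /= => Hc.
have Hc0 : c 0%N <> 0.
  move=> Hc0; move: Hc; rewrite Hc0 scale0r add0r => Hc.
  have := Hi (fun i => c i.+1) Hc; case: j Hjn Hcj => [|j] Hjn Hcj //.
  by move=> /(_ j Hjn).
move/eqP: Hc; rewrite addr_eq0 => /eqP /(congr1 (fun f => (c 0%N)^-1 *: f)).
rewrite scalerA mulVf ?scale1r => [->|]; last exact/eqP.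
have HS' := HS; case: HS => S0 [SD SZ]; apply: SZ; rewrite -sumrN.
under eq_bigr do rewrite -scaleNr.
exact: (subspace_sum HS' (fun i => - c i.+1) HSf).
Qed.

Lemma sum_cat (V : zmodType) m n (F G : nat -> V) :
  \sum_(i < m + n) (if (i < m)%N then F i else G (i - m)%N) = \sum_(i < m) F i + \sum_(i < n) G i.
Proof.
rewrite big_split_ord /=; congr (_ + _); apply: eq_bigr => i _ /=.
  by rewrite ltn_ord.
by rewrite ltnNge leq_addr /= addKn.
Qed.

Lemma fam_cat (S : Hom -> Prop) n1 (fs1 : nat -> Hom) (hs1 : nat -> H) n2 (fs2 : nat -> Hom) (hs2 : nat -> H) :
  (forall i, (i < n1)%N -> S (fs1 i)) -> (forall i, (i < n2)%N -> S (fs2 i)) ->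
  exists (fs : nat -> Hom) (hs : nat -> H), (forall i, (i < n1 + n2)%N -> S (fs i)) /\
    forall (X : zmodType) (Psi : H -> Hom -> X), \sum_(i < n1 + n2) Psi (hs i) (fs i) =
      \sum_(i < n1) Psi (hs1 i) (fs1 i) + \sum_(i < n2) Psi (hs2 i) (fs2 i).
Proof.
move=> H1 H2.
exists (fun i => if (i < n1)%N then fs1 i else fs2 (i - n1)%N).
exists (fun i => if (i < n1)%N then hs1 i else hs2 (i - n1)%N).
split.
  move=> i Hi; case: ifP => Hin; first exact: H1.
  by apply: H2; rewrite ltn_subLR // leqNgt Hin.
move=> X Psi; rewrite -(@sum_cat X n1 n2 (fun i => Psi (hs1 i) (fs1 i)) (fun i => Psi (hs2 i) (fs2 i))).
by apply: eq_bigr => i _; case: ifP.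
Qed.

Definition Nset (S : Hom -> Prop) (m : M) := exists n (fs : nat -> Hom) (hs : nat -> H),
  (forall i, (i < n)%N -> S (fs i)) /\ m = \sum_(i < n) fs i (hs i).

Lemma Nset_subspace S : is_subspace (Nset S).
Proof.
split; [|split].
- by exists 0%N, (fun _ => 0), (fun _ => 0); split => //; rewrite big_ord0.
- move=> u v [n1 [fs1 [hs1 [H1 E1]]]] [n2 [fs2 [hs2 [H2 E2]]]].
  have [fs [hs [HS E]]] := fam_cat hs1 hs2 H1 H2.
  by exists (n1 + n2)%N, fs, hs; split => //; rewrite (E _ (fun h f => f h)) E1 E2.
- move=> c v [n [fs [hs [HS E]]]]; exists n, fs, (fun i => c *: hs i); split => //.
  by rewrite E scaler_sumr; apply: eq_bigr => i _; rewrite (linZ (hom_lin _)).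
Qed.

Lemma Nset_stable S : (forall x f, S f -> S (gam x f)) -> forall x m, Nset S m -> Nset S (actM x m).
Proof.
move=> Hst x m [n [fs [hs [HS E]]]].
have [fs' [hs' [HS' E']]] := fam_cat (n1 := n) (fs1 := fun i => gam x (fs i)) hs (fun i => rho x (hs i))
   (fun i Hi => Hst x _ (HS i Hi)) HS.
exists (n + n)%N, fs', hs'; split => //; rewrite (E' _ (fun h f => f h)) E.
rewrite (lin_sum (actM_lin x)) -big_split /=; apply: eq_bigr => i _.
by rewrite subrK.
Qed.

Hypothesis HMs : simple_over (fun _ => True) actM.
Hypothesis Hiota_lin : linear_map iota.
Hypothesis Hiota_inj : forall h h', iota h = iota h' -> h = h'.
Hypothesis Hext : forall y h, b y -> iota (rho y h) = actM y (iota h).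
Hypothesis Hab : vs_direct_sum a b.

Definition iotaH := MkHom (conj Hiota_lin Hext).

Lemma h0_ex : exists h0 : H, h0 <> 0.
Proof. exact: HHs.1. Qed.

Lemma iota_nz h : h <> 0 -> iota h <> 0.
Proof. by move=> Hh E; apply: Hh; apply: Hiota_inj; rewrite E (lin0 Hiota_lin). Qed.

Lemma Nset_single (S : Hom -> Prop) f h : S f -> Nset S (f h).
Proof.
move=> Sf; exists 1%N, (fun _ => f), (fun _ => h); split; first by move=> [].
by rewrite big_ord1.
Qed.

Lemma surj m : Nset (fun _ => True) m.
Proof.
have [h0 Hh0] := h0_ex.
case: (HMs.2 _ (Nset_subspace (fun _ => True)) (fun x m _ => Nset_stable (fun _ _ _ => I) x (m := m))) => [Hz|]; last by [].
exfalso; apply: (iota_nz Hh0); apply: Hz.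
have := @Nset_single (fun _ => True) iotaH h0 I; by [].
Qed.

Lemma U_simple : simple_over a gam.
Proof.
have [h0 Hh0] := h0_ex.
split.
  exists iotaH => E; apply: (iota_nz Hh0).
  by have := congr1 (fun f : Hom => f h0) E.
move=> S HS Hst.
have Hst' : forall x f, S f -> S (gam x f).
  move=> x f Sf; have [y [z [Ay [Bz ->]]]] := Hab.2 x.
  have := gam_module.1 f 1 y z; rewrite !scale1r => ->.
  by rewrite (gam_b f Bz) addr0; apply: Hst.
case: (HMs.2 _ (Nset_subspace S) (fun x m _ => Nset_stable Hst' x (m := m))) => [Hz|Hall].
  left => f Sf; apply: hom_ext => h; rewrite hom0E; apply: Hz.
  exact: Nset_single.
right => f.
have [n [fs [hs [HSf E]]]] := Hall (f h0).
exact: (dep HS Hh0 HSf E).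
Qed.

Lemma wd2 n1 (fs1 : nat -> Hom) (hs1 : nat -> H) n2 (fs2 : nat -> Hom) (hs2 : nat -> H) :
  \sum_(i < n1) fs1 i (hs1 i) = \sum_(i < n2) fs2 i (hs2 i) ->
  forall (X : lmodType K) (Psi : H -> Hom -> X), bilinear_map Psi ->
  \sum_(i < n1) Psi (hs1 i) (fs1 i) = \sum_(i < n2) Psi (hs2 i) (fs2 i).
Proof.
move=> E X Psi HPsi.
have [fs [hs [_ Ec]]] := fam_cat (S := fun _ => True) (n1 := n1) (fs1 := fs1)
   (n2 := n2) (fs2 := fs2) hs1 (fun i => - hs2 i) (fun _ _ => I) (fun _ _ => I).
have Hz : \sum_(i < n1 + n2) fs i (hs i) = 0.
  rewrite (Ec _ (fun h f => f h)) E.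
  under [X in _ + X]eq_bigr do rewrite (linN (hom_lin _)).
  by rewrite sumrN subrr.
have := wd Hz HPsi; rewrite Ec.
under [X in _ + X = _]eq_bigr do rewrite (linN (HPsi.1 _)).
by rewrite sumrN => /eqP; rewrite subr_eq0 => /eqP.
Qed.

Lemma main_concl :
  exists (U : lmodType K) (gam : g -> U -> U),
    is_lie_module br gam /\ (forall y u, b y -> gam y u = 0) /\
    simple_over a gam /\
    exists beta : H -> U -> M,
      is_tensor_product beta /\
      forall x h u, actM x (beta h u) = beta (rho x h) u + beta h (gam x u).
Proof.
exists Hom, gam; split; first exact: gam_module.
split; first exact: gam_b.
split; first exact: U_simple.
exists (fun h (f : Hom) => f h); split; last first.
  by move=> x h f; rewrite gamE addrC subrK.
split; first exact: eval_bilin.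
move=> W Phi HPhi.
have Hs : forall m, exists t : nat * ((nat -> Hom) * (nat -> H)),
    m = \sum_(i < t.1) t.2.1 i (t.2.2 i).
  move=> m; have [n [fs [hs [_ E]]]] := surj m; by exists (n, (fs, hs)).
have [Rp HRp] := choice Hs.
pose F := fun m => \sum_(i < (Rp m).1) Phi ((Rp m).2.2 i) ((Rp m).2.1 i).
exists F; split; first split.
- move=> c m m'.
  have [fs [hs [_ Ec]]] := fam_cat (S := fun _ => True) (n1 := (Rp m).1) (fs1 := (Rp m).2.1)
    (n2 := (Rp m').1) (fs2 := (Rp m').2.1) (fun i => c *: (Rp m).2.2 i) (Rp m').2.2
    (fun _ _ => I) (fun _ _ => I).
  have E : \sum_(i < (Rp (c *: m + m')).1) (Rp (c *: m + m')).2.1 i ((Rp (c *: m + m')).2.2 i)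
         = \sum_(i < (Rp m).1 + (Rp m').1) fs i (hs i).
    rewrite -HRp (Ec _ (fun h f => f h)) -HRp.
    under eq_bigr do rewrite (linZ (hom_lin _)).
    by rewrite -scaler_sumr -HRp.
  rewrite /F (wd2 E HPhi) Ec; congr (_ + _).
  rewrite scaler_sumr; apply: eq_bigr => i _.
  by rewrite (linZ (HPhi.1 _)).
- move=> h u.
  have E : \sum_(i < (Rp (u h)).1) (Rp (u h)).2.1 i ((Rp (u h)).2.2 i)
         = \sum_(i < 1) (fun _ => u) i ((fun _ => h) i).
    by rewrite -HRp big_ord1.
  by rewrite /F (wd2 E HPhi) big_ord1.
- move=> f' Hf' Hf't t.
  rewrite {1}(HRp t) (lin_sum Hf') /F; apply: eq_bigr => i _.
  exact: Hf't.
Qed.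

End Main.

Section Ev.
Variables (K : fieldType) (V : lmodType K) (phi : V -> V).
Hypothesis Hphi : linear_map phi.

Lemma iter_lin i : linear_map (iter i phi).
Proof. elim: i => [|i IH] c u v //=; by rewrite IH Hphi. Qed.

Definition ev (p : {poly K}) (v : V) := \sum_(i < size p) p`_i *: iter i phi v.

Lemma ev_widen n (p : {poly K}) v : (size p <= n)%N -> ev p v = \sum_(i < n) p`_i *: iter i phi v.
Proof.
move=> Hn; rewrite /ev (big_ord_widen n (fun i => p`_i *: iter i phi v) Hn) big_mkcond /=.
apply: eq_bigr => i _; case: ifP => // /negbT; rewrite -leqNgt => Hi.
by rewrite nth_default // scale0r.
Qed.

Lemma evD p q v : ev (p + q) v = ev p v + ev q v.
Proof.
set n := maxn (size p) (size q).
rewrite (@ev_widen n (p + q)); last by apply: leq_trans (size_polyD _ _) _.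
rewrite (@ev_widen n p) ?leq_maxl // (@ev_widen n q) ?leq_maxr // -big_split /=.
by apply: eq_bigr => i _; rewrite coefD scalerDl.
Qed.

Lemma evZ c p v : ev (c *: p) v = c *: ev p v.
Proof.
rewrite (@ev_widen (size p) (c *: p)) ?size_scale_leq // /ev scaler_sumr.
by apply: eq_bigr => i _; rewrite coefZ scalerA.
Qed.

Lemma evN p v : ev (- p) v = - ev p v.
Proof. by rewrite -(scaleN1r p) evZ scaleN1r. Qed.

Lemma evC c v : ev c%:P v = c *: v.
Proof.
rewrite (@ev_widen 1 c%:P) ?size_polyC ?leq_b1 // big_ord1 coefC /=.
by [].
Qed.

Lemma evXM q v : ev ('X * q) v = phi (ev q v).
Proof.
rewrite (@ev_widen (size q).+1 ('X * q)); last first.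
  by apply: leq_trans (size_polyMleq _ _) _; rewrite size_polyX.
rewrite big_ord_recl coefXM /= scale0r add0r /ev (lin_sum Hphi).
apply: eq_bigr => i _; rewrite coefXM /= (linZ Hphi).
by [].
Qed.
Lemma ev0 v : ev 0 v = 0.
Proof. by rewrite /ev size_poly0 big_ord0. Qed.

Lemma evX v : ev 'X v = phi v.
Proof. by rewrite -(mulr1 'X) evXM -polyC1 evC scale1r. Qed.

Lemma ev_lin p : linear_map (ev p).
Proof.
move=> c u w; rewrite /ev scaler_sumr -big_split /=; apply: eq_bigr => i _.
by rewrite iter_lin scalerDr !scalerA mulrC.
Qed.

Lemma evM p q v : ev (p * q) v = ev p (ev q v).
Proof.
elim/poly_ind: p q v => [|p c IH] q v; first by rewrite mul0r !ev0.
rewrite mulrDl -mulrA mul_polyC evD evZ IH evXM.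
by rewrite evD IH evX evC.
Qed.

End Ev.

Section Alg.
Variables (K : closedFieldType) (V : lmodType K) (phi : V -> V).
Hypothesis Hphi : linear_map phi.
Hypothesis Hinj : forall (z : K) v, phi v - z *: v = 0 -> v = 0.

Lemma evXsubC z v : ev phi ('X - z%:P) v = phi v - z *: v.
Proof. by rewrite evD evN (evX Hphi) evC. Qed.

Lemma ev_sum (I : Type) (r : seq I) (P : pred I) (F : I -> {poly K}) v :
  ev phi (\sum_(i <- r | P i) F i) v = \sum_(i <- r | P i) ev phi (F i) v.
Proof. exact: (big_morph (fun p => ev phi p v) (fun p q => evD phi p q v) (ev0 phi v)). Qed.

Lemma ev_prod_inj (r : seq K) v : ev phi (\prod_(z <- r) ('X - z%:P)) v = 0 -> v = 0.
Proof.
have ev1 : forall w, ev phi 1 w = w.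
  by move=> w; rewrite -[1]polyC1 evC scale1r.
elim: r v => [|z r IH] v; first by rewrite big_nil ev1.
rewrite big_cons evM // evXsubC => /Hinj; exact: IH.
Qed.

Lemma alg_indep N (c : nat -> K) (v : nat -> V) (h0 : V) (a : nat -> K) :
  h0 <> 0 -> (forall i j, (i <= N)%N -> (j <= N)%N -> c i = c j -> i = j) ->
  (forall j, (j <= N)%N -> phi (v j) - c j *: v j = h0) ->
  \sum_(j < N.+1) a j *: v j = 0 -> forall j, (j <= N)%N -> a j = 0.
Proof.
move=> Hh0 Hc Hv Ha j0 Hj0; apply: contrapT => Haj0.
pose P := \prod_(k < N.+1) ('X - (c k)%:P).
pose q := fun j : 'I_N.+1 => \prod_(k < N.+1 | k != j) ('X - (c k)%:P).
pose p := \sum_(j < N.+1) a j *: q j.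
have HqP : forall j : 'I_N.+1, ev phi (q j) h0 = ev phi P (v j).
  move=> j; rewrite -(Hv j (ltn_ord j)) -evXsubC -evM //.
  by rewrite /P (bigD1 j) //= mulrC.
have E1 : ev phi p h0 = 0.
  rewrite /p ev_sum.
  under eq_bigr do rewrite evZ HqP -(linZ (ev_lin Hphi P)).
  by rewrite -(lin_sum (ev_lin Hphi P)) Ha (lin0 (ev_lin Hphi P)).
have Hj0' : (j0 < N.+1)%N by [].
pose J := Ordinal Hj0'.
have Hq0 : (q J).[c j0] != 0.
  rewrite horner_prod; apply/prodf_neq0 => k Hk.
  rewrite hornerXsubC subr_eq0; apply/eqP => E.
  move: Hk; rewrite -val_eqE /= => /eqP; apply.
  by apply: Hc => //; rewrite -ltnS.
have Hp : p.[c j0] != 0.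
  rewrite /p horner_sum (bigD1 J) //= big1 ?addr0.
    by rewrite hornerZ mulf_neq0 //; apply/eqP.
  move=> j Hj; rewrite hornerZ horner_prod (bigD1 J) /=; last by rewrite eq_sym.
  by rewrite hornerXsubC subrr mul0r mulr0.
have Hp0 : p != 0 by apply: contraNneq Hp => ->; rewrite horner0.
have [r Hr] := closed_field_poly_normal p.
move: E1; rewrite Hr evZ => /eqP; rewrite scaler_eq0 lead_coef_eq0 (negbTE Hp0) /=.
by move=> /eqP /ev_prod_inj.
Qed.
End Alg.

Section Steinitz.
Variables (K : fieldType) (V : lmodType K).

Lemma steinitz N (f : nat -> V) (w : nat -> V) :
  (forall j, (j <= N)%N -> exists c : nat -> K, w j = \sum_(i < N) c i *: f i) ->
  exists a : nat -> K, \sum_(j < N.+1) a j *: w j = 0 /\ exists j, (j <= N)%N /\ a j <> 0.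
Proof.
move=> Hw.
have Hw' : forall j, exists c : nat -> K, (j <= N)%N -> w j = \sum_(i < N) c i *: f i.
  move=> j; case: (leqP j N) => Hj; last by exists (fun _ => 0).
  by have [c Hc] := Hw j Hj; exists c.
have [cf Hcf] := choice Hw'.
pose A : 'M[K]_(N.+1, N) := \matrix_(j, i) cf j i.
have Hk : kermx A != 0.
  rewrite -mxrank_eq0 mxrank_ker subn_eq0 -ltnNge ltnS.
  exact: rank_leq_col.
have [j0 Hj0] : exists j0, row j0 (kermx A) != 0.
  apply: contrapT => Hno; move/eqP: Hk; apply; apply/row_matrixP => i.
  rewrite row0; apply/eqP; apply: contrapT => Hne; apply: Hno; by exists i; apply/negP.
set x := row j0 (kermx A) in Hj0.
have Hx : x *m A = 0 by rewrite /x -row_mul mulmx_ker row0.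
have [k Hk'] : exists k, x 0 k != 0.
  apply: contrapT => Hno; move/eqP: Hj0; apply; apply/rowP => k.
  rewrite [in RHS]mxE; apply/eqP; apply: contrapT => Hne; apply: Hno.
  by exists k; apply/negP.
exists (fun j => x 0 (inord j)); split; last first.
  by exists k; split; [rewrite -ltnS | rewrite inord_val; apply/eqP].
under eq_bigr => j _ do rewrite inord_val (Hcf j (ltn_ord j)) scaler_sumr.
rewrite exchange_big /=; apply: big1 => i _.
under eq_bigr do rewrite scalerA.
rewrite -scaler_suml.
have -> : \sum_(j < N.+1) x 0 j * cf j i = (x *m A) 0 i.
  by rewrite mxE; apply: eq_bigr => j _; rewrite /A; congr (_ * _); rewrite mxE.
by rewrite Hx mxE scale0r.
Qed.
End Steinitz.

Section Span.
Variables (K : fieldType) (V : lmodType K).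

Lemma pad n N (c : nat -> K) (f : nat -> V) : (n <= N)%N ->
  \sum_(i < n) c i *: f i = \sum_(i < N) (if (i < n)%N then c i else 0) *: f i.
Proof.
move=> Hn; rewrite (big_ord_widen N (fun i => c i *: f i) Hn) big_mkcond /=.
by apply: eq_bigr => i _; case: ifP => //; rewrite scale0r.
Qed.

Lemma subspace_sumV (S : V -> Prop) : is_subspace S ->
  forall n (c : nat -> K) (F : nat -> V), (forall i, (i < n)%N -> S (F i)) ->
  S (\sum_(i < n) c i *: F i).
Proof.
move=> [S0 [SD SZ]]; elim=> [|n IH] c F HF; first by rewrite big_ord0.
rewrite big_ord_recr /=; apply: SD; last by apply: SZ; apply: HF.
by apply: IH => i Hi; apply: HF; apply: ltnW.
Qed.

Definition spanned (f : nat -> V) (h : V) := exists N (c : nat -> K), h = \sum_(i < N) c i *: f i.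

Lemma spanned_subspace f : is_subspace (spanned f).
Proof.
split; [|split].
- by exists 0%N, (fun _ => 0); rewrite big_ord0.
- move=> u v [n1 [c1 ->]] [n2 [c2 ->]].
  exists (maxn n1 n2), (fun i => (if (i < n1)%N then c1 i else 0) + (if (i < n2)%N then c2 i else 0)).
  rewrite (@pad n1 (maxn n1 n2)) ?leq_maxl // (@pad n2 (maxn n1 n2)) ?leq_maxr //.
  by rewrite -big_split /=; apply: eq_bigr => i _; rewrite scalerDl.
- move=> c v [n [d ->]]; exists n, (fun i => c * d i).
  by rewrite scaler_sumr; apply: eq_bigr => i _; rewrite scalerA.
Qed.

Lemma spanned_single f k : spanned f (f k).
Proof.
exists k.+1, (fun i => (i == k)%:R); rewrite big_ord_recr /= eqxx scale1r big1 ?add0r //.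
by move=> i _; rewrite (ltn_eqF (ltn_ord i)) scale0r.
Qed.
End Span.

Section HCount.
Variables (K : fieldType) (g : lmodType K) (b : g -> Prop).
Variables (H : lmodType K) (rho : g -> H -> H).
Hypothesis Hlinx : forall v, linear_map (fun x => rho x v).
Hypothesis Hlin : forall x, linear_map (rho x).
Hypothesis HHs : simple_over b rho.
Hypothesis Hcount : countable_dim g.

Lemma H_countable : exists f : nat -> H, forall h, spanned f h.
Proof.
have [e He] := Hcount.
have [h0 Hh0] := HHs.1.
pose vw := fun w : seq nat => foldr (fun i acc => rho (e i) acc) h0 w.
pose f := fun n => if unpickle n is Some w then vw w else 0.
exists f.
have Hst : forall x h, spanned f h -> spanned f (rho x h).
  move=> x h [N [c ->]]; rewrite (lin_sum (Hlin x)).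
  under eq_bigr do rewrite (linZ (Hlin x)).
  apply: (subspace_sumV (spanned_subspace f) (n := N) (F := fun i => rho x (f i)) c).
Show.
  move=> i _; have [n [d ->]] := He x.
  rewrite (lin_sum (Hlinx _)).
  under eq_bigr do rewrite (linZ (Hlinx _)).
  apply: (subspace_sumV (spanned_subspace f) (n := n) (F := fun j => rho (e j) (f i)) d).
  move=> j _; rewrite /f; case E: (unpickle i) => [w|].
    have -> : rho (e j) (vw w) = f (pickle (j :: w)) by rewrite /f pickleK.
    exact: spanned_single.
  rewrite (lin0 (Hlin _)); exact: (spanned_subspace f).1.
case: (HHs.2 _ (spanned_subspace f) (fun x v _ => Hst x v)) => [Hz|//].
exfalso; apply: Hh0; have := Hz (f (pickle ([::] : seq nat))) (spanned_single f _).
by rewrite /f pickleK.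
Qed.
End HCount.

Section Dixmier.
Variables (K : closedFieldType) (g : lmodType K) (b : g -> Prop).
Variables (H : lmodType K) (rho : g -> H -> H).
Hypothesis Hlin : forall x, linear_map (rho x).
Hypothesis HHs : simple_over b rho.
Variable f : nat -> H.
Hypothesis Hf : forall h, spanned f h.
Hypothesis Unc : forall n : K -> nat, exists N (s : nat -> K),
  (forall i j, (i <= N)%N -> (j <= N)%N -> s i = s j -> i = j) /\
  (forall j, (j <= N)%N -> (n (s j) <= N)%N).

Lemma dixmier (phi : H -> H) : linear_map phi ->
  (forall y h, b y -> phi (rho y h) = rho y (phi h)) -> exists c : K, forall h, phi h = c *: h.
Proof.
move=> Hphi Heq; apply: contrapT => Hno.
pose psi := fun (r : K) h => phi h - r *: h.
have psi_lin : forall r, linear_map (psi r).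
  move=> r c u v; rewrite /psi Hphi scalerBr scalerDr !scalerA opprD !addrA.
  by congr (_ - _); rewrite addrAC mulrC.
have psi_eqv : forall r y h, b y -> psi r (rho y h) = rho y (psi r h).
  by move=> r y h By; rewrite /psi Heq // (linB (Hlin y)) (linZ (Hlin y)).
have Hnz : forall r, exists h, psi r h <> 0.
  move=> r; apply: contrapT => Hall; apply: Hno; exists r => h.
  apply/eqP; rewrite -subr_eq0; apply/eqP; apply: contrapT => Hne; apply: Hall; by exists h.
have Hinj : forall (r : K) v, phi v - r *: v = 0 -> v = 0.
  move=> r v Hv.
  pose Sk := fun v => psi r v = 0.
  have HS : is_subspace Sk.
    split; [|split].
    - exact: (lin0 (psi_lin r)).
    - by move=> u w; rewrite /Sk (linD (psi_lin r)) => -> ->; rewrite addr0.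
    - by move=> c w; rewrite /Sk (linZ (psi_lin r)) => ->; rewrite scaler0.
  have Hst : forall y w, b y -> Sk w -> Sk (rho y w).
    by move=> y w By; rewrite /Sk psi_eqv // => ->; rewrite (lin0 (Hlin y)).
  case: (HHs.2 Sk HS Hst) => [Hz|Hall]; first exact: Hz.
  by have [h Hh] := Hnz r; exfalso; apply: Hh; apply: Hall.
have Hsurj : forall (r : K) u, exists v, psi r v = u.
  move=> r.
  pose Si := fun u => exists v, psi r v = u.
  have HS : is_subspace Si.
    split; [|split].
    - by exists 0; exact: (lin0 (psi_lin r)).
    - by move=> u w [v1 <-] [v2 <-]; exists (v1 + v2); rewrite (linD (psi_lin r)).
    - by move=> c w [v1 <-]; exists (c *: v1); rewrite (linZ (psi_lin r)).
  have Hst : forall y w, b y -> Si w -> Si (rho y w).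
    by move=> y w By [v <-]; exists (rho y v); rewrite psi_eqv.
  case: (HHs.2 Si HS Hst) => [Hz|Hall]; last exact: Hall.
  by have [h Hh] := Hnz r; exfalso; apply: Hh; apply: Hz; exists h.
have [h0 Hh0] := HHs.1.
have [Vr HVr] := choice (fun r => Hsurj r h0).
have Hsp : forall r, exists p : nat * (nat -> K), Vr r = \sum_(i < p.1) p.2 i *: f i.
  by move=> r; have [N [c E]] := Hf (Vr r); exists (N, c).
have [Rr HRr] := choice Hsp.
have [N [s [Hs1 Hs2]]] := Unc (fun r => (Rr r).1).
have [a [Ha [j [Hj Haj]]]] := steinitz (N := N) (f := f) (w := fun j => Vr (s j))
  (fun j Hj => ex_intro _ (fun i => if (i < (Rr (s j)).1)%N then (Rr (s j)).2 i else 0) (etrans (HRr (s j)) (pad _ f (Hs2 j Hj)))).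
apply: Haj; apply: (alg_indep Hphi Hinj (v := fun j => Vr (s j)) Hh0 Hs1 _ Ha Hj).
by move=> j' _; apply: HVr.
Qed.
End Dixmier.

From mathcomp Require Import classical_sets cardinality functions.
From mathcomp Require Import lebesgue_measure measure ereal.
From mathcomp Require Import finmap.

Section Uncount.
Import Num.Theory.
Local Open Scope classical_set_scope.
Local Open Scope ring_scope.
Lemma R_uncount (R : realType) (n : R -> nat) :
  exists N, infinite_set [set x | (n x <= N)%N].
Proof.
apply: contrapT => Hno.
have Hfin : forall N, finite_set [set x | (n x <= N)%N].
  move=> N; apply: contrapT => Hinf; apply: Hno; by exists N.
have Hc : countable [set: R].
  have -> : [set: R] = \bigcup_(N in [set: nat]) [set x | (n x <= N)%N].
    apply/seteqP; split => [x _|x _ //].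
    by rewrite /bigcup /=; exists (n x).
  apply: (@bigcup_countable nat R [set: nat]); first exact: countableP.
  by move=> N _; apply: finite_set_countable.
have := countable_lebesgue_measure0 (sub_countable (subset_card_le (subsetT `[0%R, 1%R]%classic)) Hc).
rewrite lebesgue_measure_itv /= lte_fin ltr01 /=.
by rewrite oppr0 adde0 => /eqP; rewrite eqe oner_eq0.
Qed.

Lemma C_uncount (R : realType) (n : R[i] -> nat) : exists N (s : nat -> R[i]),
  (forall i j, (i <= N)%N -> (j <= N)%N -> s i = s j -> i = j) /\
  (forall j, (j <= N)%N -> (n (s j) <= N)%N).
Proof.
have [N HN] := R_uncount (fun x : R => n (x%:C)%C).
have [B HB HcB] := infinite_set_fset N.+1 HN.
pose l := enum_fset B.
have Hu : uniq l := fset_uniq B.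
have Hs : (N < size l)%N by [].
exists N, (fun j => ((nth 0 l j)%:C)%C); split.
  move=> i j Hi Hj E; apply/eqP; rewrite -(nth_uniq 0 _ _ Hu); last 2 first.
  - exact: leq_ltn_trans Hi Hs.
  - exact: leq_ltn_trans Hj Hs.
  by apply/eqP; case: E.
move=> j Hj; apply: (HB (nth 0 l j)).
by rewrite /= mem_nth //; apply: leq_ltn_trans Hj Hs.
Qed.

End Uncount.

Theorem theorem2p13 (R : realType)
    (g : lmodType R[i]) (br : g -> g -> g) (a b : g -> Prop)
    (Hg : is_lie_algebra br) (Hcount : countable_dim g)
    (Ha : lie_subalgebra br a) (Hb : lie_ideal br b) (Hab : vs_direct_sum a b)
    (M : lmodType R[i]) (actM : g -> M -> M)
    (HM : is_lie_module br actM) (HMs : simple_over (fun _ => True) actM)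
    (* H, realised as a vector space with an embedding iota into M whose image is
       a b-submodule; rho is the g-module structure H^g extending the b-action *)
    (H : lmodType R[i]) (iota : H -> M) (rho : g -> H -> H)
    (Hiota_lin : linear_map iota) (Hiota_inj : forall h h', iota h = iota h' -> h = h')
    (Hrho : is_lie_module br rho)
    (Hext : forall y h, b y -> iota (rho y h) = actM y (iota h))
    (HHs : simple_over b rho) :
  exists (U : lmodType R[i]) (gam : g -> U -> U),
    (* U^g : the a-module U with b acting trivially *)
    is_lie_module br gam /\ (forall y u, b y -> gam y u = 0) /\
    simple_over a gam /\
    (* M is isomorphic to H^g (x) U^g as g-modules *)
    exists beta : H -> U -> M,
      is_tensor_product beta /\
      forall x h u, actM x (beta h u) = beta (rho x h) u + beta h (gam x u).
Proof.
have [f Hf] := H_countable Hrho.1 Hrho.2.1 HHs Hcount.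
have Schur := dixmier Hrho.2.1 HHs Hf (@C_uncount R).
exact: (main_concl HM Hrho Hb HHs Schur HMs Hiota_lin Hiota_inj Hext Hab).
Qed.
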